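(* Let $0=p_0<p_1<\cdots<p_M<p_{M+1}=1$ and let $c$ be a risk model on a labelled sample $\{(\bm x_j,y_j)\}_{j=1}^N$. (a) If for some $k\in\{0,1,\dots,M-1\}$ we have $p_{k+1}N_k<O_k$, then the model $c_k'$ defined by $c_k'(\bm x_j)=p_{k+1}$ if $c(\bm x_j)\in[p_k,p_{k+1})$ and $c_k'(\bm x_j)=c(\bm x_j)$ otherwise, has strictly larger $\mathrm{AUNBC}$ than $c$. (b) If for some $k\in\{1,\dots,M\}$ we have $p_kN_k>O_k$, then the model $c_k''$ defined by $c_k''(\bm x_j)=p_{k-1}$ if $c(\bm x_j)\in G_k$ and $c_k''(\bm x_j)=c(\bm x_j)$ otherwise, has strictly larger $\mathrm{AUNBC}$ than $c$.
   Context: A risk model is any function $c$ assigning to each sample a value $c(\bm x_j)\in[0,1]$. For $i=0,\dots,M$, $\mathrm{TP}_i(c)=\#\{j:c(\bm x_j)\ge p_i,\ y_j=1\}$, $\mathrm{FP}_i(c)=\#\{j:c(\bm x_j)\ge p_i,\ y_j=0\}$, with $\mathrm{TP}_{M+1}=\mathrm{FP}_{M+1}=0$, and $\mathrm{AUNBC}(c)=\frac1N\sum_{i=0}^M(p_{i+1}-p_i)\big(\mathrm{TP}_i(c)-\mathrm{FP}_i(c)\frac{p_i}{1-p_i}\big)$. The risk groups are $G_i=[p_i,p_{i+1})$ for $i=0,\dots,M-1$ and $G_M=[p_M,1]$; $N_i$ is the number of samples with $c(\bm x_j)\in G_i$ and $O_i$ the number of positive samples ($y_j=1$) with $c(\bm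 x_j)\in G_i$ (equivalently $O_i=\mathrm{TP}_i-\mathrm{TP}_{i+1}$, $N_i=O_i+\mathrm{FP}_i-\mathrm{FP}_{i+1}$). *)

(* Defs.v *)
From mathcomp Require Import all_boot all_order all_algebra.
Set Implicit Arguments. Unset Strict Implicit. Unset Printing Implicit Defensive.
Import Order.TTheory GRing.Theory Num.Theory.
Local Open Scope ring_scope.

Section Defs.
Variables (R : realFieldType) (N M : nat) (p : nat -> R).

(* risk model on the N samples: c j = c(x_j); labels y j = (y_j == 1) *)
Definition TP (c : 'I_N -> R) (y : 'I_N -> bool) (i : nat) : R :=
  if (i <= M)%N then (#|[set j | (p i <= c j) && y j]|)%:R else 0.
Definition FP (c : 'I_N -> R) (y : 'I_N -> bool) (i : nat) : R :=
  if (i <= M)%N then (#|[set j | (p i <= c j) && ~~ y j]|)%:R else 0.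

Definition AUNBC (c : 'I_N -> R) (y : 'I_N -> bool) : R :=
  N%:R^-1 * \sum_(0 <= i < M.+1)
     (p i.+1 - p i) * (TP c y i - FP c y i * (p i / (1 - p i))).

Definition inG (i : nat) (v : R) : bool :=
  if (i < M)%N then (p i <= v) && (v < p i.+1)
  else (p M <= v) && (v <= 1).

Definition Ncount (c : 'I_N -> R) (i : nat) : R :=
  (#|[set j | inG i (c j)]|)%:R.
Definition Ocount (c : 'I_N -> R) (y : 'I_N -> bool) (i : nat) : R :=
  (#|[set j | inG i (c j) && y j]|)%:R.
End Defs.

(* Main.v *)
Require Import Defs.
From mathcomp Require Import all_boot all_order all_algebra ring lra.
Import Order.TTheory GRing.Theory Num.Theory.
Local Open Scope ring_scope.

Section H.
Variables (R : realFieldType) (N M : nat) (p : nat -> R).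

Lemma card_sum (P : pred 'I_N) : (#|[set j | P j]|%:R : R) = \sum_j (P j)%:R.
Proof.
rewrite -sum1_card natr_sum big_mkcond /=; apply: eq_bigr => j _.
by rewrite inE; case: (P j).
Qed.

Definition w (i : nat) (b : bool) : R := if b then 1 else - (p i / (1 - p i)).

Lemma T_sum (c : 'I_N -> R) y i : (i <= M)%N ->
  TP M p c y i - FP M p c y i * (p i / (1 - p i)) =
  \sum_j ((p i <= c j)%R)%:R * w i (y j).
Proof.
move=> hi; rewrite /TP /FP hi !card_sum mulr_suml -sumrB.
apply: eq_bigr => j _; rewrite /w.
by case: (p i <= c j); case: (y j) => /=; rewrite ?mul0r ?mul1r ?subr0 ?sub0r ?mulr1 ?mulN1r.
Qed.

Lemma AUNBC_diff (c c' : 'I_N -> R) y :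
  AUNBC M p c' y - AUNBC M p c y =
  N%:R^-1 * \sum_(0 <= i < M.+1) (p i.+1 - p i) *
     \sum_j (((p i <= c' j)%R)%:R - ((p i <= c j)%R)%:R) * w i (y j).
Proof.
rewrite /AUNBC -mulrBr -sumrB; congr (_ * _).
rewrite big_nat [RHS]big_nat; apply: eq_bigr => i /andP[_ hi].
rewrite -mulrBr !T_sum // -sumrB; congr (_ * _).
by apply: eq_bigr => j _; rewrite mulrBl.
Qed.

Hypothesis hp : forall i, (i <= M)%N -> p i < p i.+1.

Lemma p_lt a b : (a < b)%N -> (b <= M.+1)%N -> p a < p b.
Proof.
elim: b => // b IH hab hb.
move: hab; rewrite ltnS leq_eqVlt => /orP[/eqP->|hab]; first exact: hp.
exact: lt_trans (IH hab (ltnW hb)) (hp _ hb).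
Qed.

Lemma p_le a b : (a <= M.+1)%N -> (b <= M.+1)%N -> (p a <= p b) = (a <= b)%N.
Proof.
move=> ha hb; case: (ltngtP a b) => [h|h|->].
- by rewrite ltW // p_lt.
- by apply/negbTE; rewrite -ltNge; exact: p_lt.
- by rewrite lexx.
Qed.

Lemma thr (v : R) k i : (k <= M)%N -> (i <= M)%N -> p k <= v ->
  (forall i, (k < i)%N -> (i <= M)%N -> v < p i) ->
  (p i <= v) = (i <= k)%N.
Proof.
move=> hk hi hv hlt; case: (leqP i k) => h.
- by apply: le_trans hv; rewrite p_le ?leqW.
- by apply: negbTE; rewrite -ltNge; exact: hlt.
Qed.

Lemma sum_pick (F : nat -> R) k : (k < M.+1)%N ->
  \sum_(0 <= i < M.+1) (i == k)%:R * F i = F k.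
Proof.
move=> hk; rewrite (bigD1_seq k) ?mem_index_iota ?iota_uniq //=.
by rewrite eqxx mul1r big1 ?addr0 // => i /negbTE ->; rewrite mul0r.
Qed.

Lemma S_val (c : 'I_N -> R) y k i :
  \sum_j (inG M p k (c j))%:R * w i (y j) =
  Ocount M p c y k - (Ncount M p c k - Ocount M p c y k) * (p i / (1 - p i)).
Proof.
rewrite /Ocount /Ncount !card_sum.
have -> : \sum_j (inG M p k (c j))%:R =
  \sum_j (inG M p k (c j) && y j)%:R + \sum_j (inG M p k (c j) && ~~ y j)%:R :> R.
  rewrite -big_split; apply: eq_bigr => j _.
  by case: (inG M p k (c j)); case: (y j); rewrite /= ?addr0 ?add0r.
rewrite addrAC subrr add0r mulr_suml -sumrB; apply: eq_bigr => j _; rewrite /w.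
by case: (inG M p k (c j)); case: (y j) => /=; rewrite ?mul0r ?mul1r ?subr0 ?sub0r ?mulr1 ?mulN1r.
Qed.
End H.
Arguments w {R}.
Arguments p_le {R M p}.
Arguments p_lt {R M p}.
Arguments thr {R M p}.
Arguments AUNBC_diff {R N}.
Arguments sum_pick {R M}.
Arguments S_val {R N M p}.

Lemma fin_pos (R : realFieldType) (N : nat) (P : pred 'I_N) :
  0 < (#|[set j | P j]|%:R : R) -> (0 < N)%N.
Proof.
rewrite ltr0n => h; apply: (leq_trans h).
by rewrite -[X in (_ <= X)%N](card_ord N) max_card.
Qed.

Lemma final_pos (R : realFieldType) (q O Nk : R) :
  0 <= q -> q < 1 -> q * Nk < O -> 0 < O - (Nk - O) * (q / (1 - q)).
Proof.
move=> h0 h1 h.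
have hq : 1 - q != 0 by rewrite subr_eq0 eq_sym lt_eqF.
have -> : O - (Nk - O) * (q / (1 - q)) = (O - q * Nk) / (1 - q) by field.
by rewrite divr_gt0 // subr_gt0.
Qed.

Lemma final_pos2 (R : realFieldType) (q O Nk : R) :
  0 <= q -> q < 1 -> q * Nk > O -> 0 < - (O - (Nk - O) * (q / (1 - q))).
Proof.
move=> h0 h1 h.
have hq : 1 - q != 0 by rewrite subr_eq0 eq_sym lt_eqF.
have -> : - (O - (Nk - O) * (q / (1 - q))) = (q * Nk - O) / (1 - q) by field.
by rewrite divr_gt0 // subr_gt0.
Qed.

Theorem theorem2 (R : realFieldType) (N M : nat) (p : nat -> R)
  (c : 'I_N -> R) (y : 'I_N -> bool) :
  p 0%N = 0 -> p M.+1 = 1 ->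
  (forall i : nat, (i <= M)%N -> p i < p i.+1) ->
  (forall j, 0 <= c j <= 1) ->
  (forall k : nat, (k < M)%N ->
     p k.+1 * Ncount M p c k < Ocount M p c y k ->
     let c' := fun j => if (p k <= c j) && (c j < p k.+1) then p k.+1 else c j in
     AUNBC M p c y < AUNBC M p c' y) /\
  (forall k : nat, (1 <= k <= M)%N ->
     p k * Ncount M p c k > Ocount M p c y k ->
     let c'' := fun j => if inG M p k (c j) then p k.-1 else c j in
     AUNBC M p c y < AUNBC M p c'' y).
Proof.
move=> p0 pM hp hc.
have pge0 : forall i, (i <= M.+1)%N -> 0 <= p i.
  by move=> i hi; rewrite -p0 (p_le hp) //.
have plt1 : forall i, (i <= M)%N -> p i < 1.
  by move=> i hi; rewrite -pM (p_lt hp).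
split.
- move=> k hk hlt; rewrite /=; set c' := (fun j : 'I_N => if _ then _ else _).
  have hG : forall j, inG M p k (c j) = (p k <= c j) && (c j < p k.+1).
    by move=> j; rewrite /inG hk.
  have key : forall i j, (i <= M)%N ->
    ((p i <= c' j)%R)%:R - ((p i <= c j)%R)%:R =
      ((i == k.+1)%:R * (inG M p k (c j))%:R : R).
    move=> i j hi; rewrite /c' -hG; case hg: (inG M p k (c j)) => /=;
      last by rewrite subrr mulr0.
    move: hg; rewrite hG => /andP[h1 h2].
    have -> : (p i <= c j) = (i <= k)%N.
      apply: (thr hp) => //; first exact: ltnW.
      move=> i' hi' hi'M; apply: (lt_le_trans h2).
      by rewrite (p_le hp) ?leqW.
    rewrite (p_le hp _ _ (leqW hi) (leqW hk)).
    rewrite mulr1 leq_eqVlt ltnS; case: eqP => [->|_] /=.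
      by rewrite ltnn subr0.
    by case: (i <= k)%N; rewrite subrr.
  rewrite -subr_gt0 (AUNBC_diff M p).
  have E : \sum_(0 <= i < M.+1) (p i.+1 - p i) *
     \sum_j (((p i <= c' j)%R)%:R - ((p i <= c j)%R)%:R) * w p i (y j) =
     \sum_(0 <= i < M.+1) (i == k.+1)%:R * ((p i.+1 - p i) *
        \sum_j (inG M p k (c j))%:R * w p i (y j)).
    rewrite !big_nat; apply: eq_bigr => i /andP[_ hi].
    rewrite mulrCA; congr (_ * _); rewrite mulr_sumr; apply: eq_bigr => j _.
    by rewrite key // mulrA.
  rewrite E sum_pick // S_val.
  have hN : (0 < N)%N.
    apply: (@fin_pos R N (fun j => inG M p k (c j) && y j)).
    apply: (le_lt_trans _ hlt); apply: mulr_ge0; first by apply: pge0; apply: ltnW.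
    by rewrite /Ncount ler0n.
  apply: mulr_gt0; first by rewrite invr_gt0 ltr0n.
  apply: mulr_gt0; first by rewrite subr_gt0; apply: hp.
  by apply: final_pos => //; [apply: pge0; apply: ltnW | apply: plt1].
- case=> [|k] // /andP[_ hk] hlt; rewrite /=; set c'' := (fun j : 'I_N => if _ then _ else _).
  have key : forall i j, (i <= M)%N ->
    ((p i <= c'' j)%R)%:R - ((p i <= c j)%R)%:R =
      ((i == k.+1)%:R * (- (inG M p k.+1 (c j))%:R) : R).
    move=> i j hi; rewrite /c''; case hg: (inG M p k.+1 (c j)) => /=;
      last by rewrite subrr oppr0 mulr0.
    have [h1 h2] : p k.+1 <= c j /\
        (forall i, (k.+1 < i)%N -> (i <= M)%N -> c j < p i).
      move: hg; rewrite /inG; case: (ltnP k.+1 M) => hkM /andP[h1 h2].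
        split; first exact: h1.
        move=> i' hi' hi'M; apply: (lt_le_trans h2).
        by rewrite (p_le hp) ?leqW.
      have eM : k.+1 = M by apply/eqP; rewrite eqn_leq hk hkM.
      split; first by rewrite eM; exact: h1.
      by move=> i' hi' hi'M; move: (leq_trans hi' hi'M); rewrite ltnNge hkM.
    have -> : (p i <= c j) = (i <= k.+1)%N by apply: (thr hp).
    rewrite (p_le hp _ _ (leqW hi) (leqW (ltnW hk))).
    rewrite mulrN1 [(i <= k.+1)%N]leq_eqVlt ltnS /=; case: eqP => [->|_] /=.
      by rewrite ltnn sub0r.
    by case: (i <= k)%N; rewrite subrr oppr0.
  rewrite -subr_gt0 (AUNBC_diff M p).
  have E : \sum_(0 <= i < M.+1) (p i.+1 - p i) *
     \sum_j (((p i <= c'' j)%R)%:R - ((p i <= c j)%R)%:R) * w p i (y j) =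
     \sum_(0 <= i < M.+1) (i == k.+1)%:R * ((p i.+1 - p i) *
        - \sum_j (inG M p k.+1 (c j))%:R * w p i (y j)).
    rewrite !big_nat; apply: eq_bigr => i /andP[_ hi].
    rewrite mulrCA; congr (_ * _); rewrite -sumrN mulr_sumr; apply: eq_bigr => j _.
    by rewrite key // -mulrA mulNr.
  rewrite E sum_pick // S_val.
  have hNk : 0 < Ncount M p c k.+1.
    rewrite lt_def ler0n andbT; apply/eqP => h0; move: hlt; rewrite h0 mulr0.
    by rewrite ltNge /Ocount ler0n.
  have hN : (0 < N)%N by apply: (fin_pos _ _ _ hNk).
  apply: mulr_gt0; first by rewrite invr_gt0 ltr0n.
  apply: mulr_gt0; first by rewrite subr_gt0; apply: hp.
  by apply: final_pos2 => //; [apply: pge0; apply: leqW | apply: plt1].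
Qed.
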